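(* Let $\mathcal{H}\in\mathbb{R}_D^{[2,2]}$ and write its Hermitian flattening matrix as $\mathfrak{m}(\mathcal{H})=\begin{pmatrix}A&C\\C&B\end{pmatrix}$ with $A,B,C$ real symmetric $2\times 2$ matrices. Then $\operatorname{hrank}_{\mathbb{R}}(\mathcal{H})\le 5$. Moreover, if one of $A,B$ is positive definite (or negative definite), or if $A=B=0$, then $\operatorname{hrank}(\mathcal{H})=\operatorname{hrank}_{\mathbb{R}}(\mathcal{H})\le 4$.
   Context: $\mathbb{C}^{[n_1,n_2]}$ is the real vector space of tensors $\mathcal{H}\in\mathbb{C}^{n_1\times n_2\times n_1\times n_2}$ with $\mathcal{H}_{i_1i_2j_1j_2}=\overline{\mathcal{H}_{j_1j_2i_1i_2}}$. For $v_i\in\mathbb{C}^{n_i}$, $[v_1,v_2]_{\otimes h}:=v_1\otimes v_2\otimes\overline{v_1}\otimes\overline{v_2}$. The Hermitian rank $\operatorname{hrank}(\mathcal{H})$ is the smallest $r$ with $\mathcal{H}=\sum_{i=1}^r\lambda_i[u_i^1,u_i^2]_{\otimes h}$, $\lambda_i\in\mathbb{R}$, $u_i^j\in\mathbb{C}^{n_j}$. $\mathbb{R}_D^{[2,2]}$ is the set of real tensors in $\mathbb{C}^{[2,2]}$ that can be written as $\sum_i\lambda_i[u_i^1,u_i^2]_{\otimes h}$ with $\lambda_i\in\mathbb{R}$ and real vectors $u_i^j\in\mathbb{R}^2$; for such $\mathcal{H}$, $\operatorname{hrank}_{\mathbb{R}}(\mathcal{H})$ is the smallest length of such a decomposition with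 real vectors. The Hermitian flattening $\mathfrak{m}(\mathcal{H})$ is the $4\times4$ matrix with $(\mathfrak{m}(\mathcal{H}))_{(i_1,i_2),(j_1,j_2)}=\mathcal{H}_{i_1i_2j_1j_2}$, rows and columns indexed by pairs in lexicographic order $(1,1),(1,2),(2,1),(2,2)$; equivalently $\mathfrak{m}$ is linear with $\mathfrak{m}([v_1,v_2]_{\otimes h})=(v_1v_1^* )\boxtimes(v_2v_2^* )$, $\boxtimes$ the Kronecker product. Thus $A$ is the block with $i_1=j_1=1$, $B$ the block with $i_1=j_1=2$, $C$ the block with $i_1=1,j_1=2$. *)

(* Defs.v *)
From HB Require Import structures.
From mathcomp Require Import all_boot all_order all_algebra.
From mathcomp Require Import reals.
From mathcomp Require Import complex.
Set Implicit Arguments. Unset Strict Implicit. Unset Printing Implicit Defensive.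
Import Order.TTheory GRing.Theory Num.Theory.
Local Open Scope ring_scope.

(* Tensors in C^{2 x 2 x 2 x 2} (or R^{...}), indexed by 'I_2 (index 0 <-> paper's 1). *)
Definition tensor22 (K : Type) := 'I_2 -> 'I_2 -> 'I_2 -> 'I_2 -> K.

Definition hsimple (R : realType) (v1 v2 : 'I_2 -> R[i]) : tensor22 R[i] :=
  fun i1 i2 j1 j2 => v1 i1 * v2 i2 * conjc (v1 j1) * conjc (v2 j2).

Definition hsimpleR (R : realType) (v1 v2 : 'I_2 -> R) : tensor22 R :=
  fun i1 i2 j1 j2 => v1 i1 * v2 i2 * v1 j1 * v2 j2.

Definition hdecomp_le (R : realType) (H : tensor22 R[i]) (r : nat) : Prop :=
  exists (lam : 'I_r -> R) (u1 u2 : 'I_r -> 'I_2 -> R[i]),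
    H = fun i1 i2 j1 j2 => \sum_(k < r) real_complex R (lam k) * hsimple (u1 k) (u2 k) i1 i2 j1 j2.

Definition hdecompR_le (R : realType) (H : tensor22 R) (r : nat) : Prop :=
  exists (lam : 'I_r -> R) (u1 u2 : 'I_r -> 'I_2 -> R),
    H = fun i1 i2 j1 j2 => \sum_(k < r) lam k * hsimpleR (u1 k) (u2 k) i1 i2 j1 j2.

Definition is_hrank (R : realType) (H : tensor22 R[i]) (r : nat) : Prop :=
  hdecomp_le H r /\ forall s, hdecomp_le H s -> (r <= s)%N.

Definition is_hrankR (R : realType) (H : tensor22 R) (r : nat) : Prop :=
  hdecompR_le H r /\ forall s, hdecompR_le H s -> (r <= s)%N.

Definition in_RD (R : realType) (H : tensor22 R) : Prop := exists r, hdecompR_le H r.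

Definition tensorC (R : realType) (H : tensor22 R) : tensor22 R[i] :=
  fun i1 i2 j1 j2 => real_complex R (H i1 i2 j1 j2).

(* Hermitian flattening: rows/columns indexed lexicographically, (i1,i2) |-> 2*i1+i2. *)
Definition fst_idx (i : 'I_(2 + 2)) : 'I_2 := inord (i %/ 2).
Definition snd_idx (i : 'I_(2 + 2)) : 'I_2 := inord (i %% 2).
Definition hflat (R : realType) (H : tensor22 R) : 'M[R]_(2 + 2) :=
  \matrix_(i, j) H (fst_idx i) (snd_idx i) (fst_idx j) (snd_idx j).

Definition posdef (R : realType) (n : nat) (M : 'M[R]_n) : Prop :=
  forall x : 'cV[R]_n, x != 0 -> 0 < (x^T *m M *m x) 0 0.
Definition negdef (R : realType) (n : nat) (M : 'M[R]_n) : Prop := posdef (- M).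

(* Main.v *)
Require Import Defs.
From HB Require Import structures.
From mathcomp Require Import all_boot all_order all_algebra.
From mathcomp Require Import reals.
From mathcomp Require Import complex.
From mathcomp Require Import ring lra.
From Stdlib Require Import FunctionalExtensionality Classical.
Import Order.TTheory GRing.Theory Num.Theory.
Local Open Scope ring_scope.



Lemma rank1 {R : realType} (P Q S : R) : P * S = Q ^+ 2 ->
  exists nu w0 w1 : R, [/\ (w0 != 0) || (w1 != 0), P = nu * w0 ^+ 2,
     Q = nu * w0 * w1 & S = nu * w1 ^+ 2].
Proof.
move=> h; have [P0|P0] := eqVneq P 0.
  have Q0 : Q = 0 by apply/eqP; rewrite -sqrf_eq0 -h P0 mul0r.
  exists S, 0, 1; split => //; rewrite ?oner_neq0 ?orbT //; rewrite ?P0 ?Q0; ring.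
exists P, 1, (Q / P); split; rewrite ?oner_neq0 //.
- ring.
- by field.
- apply: (mulfI P0); rewrite h; field; done.
Qed.

Arguments rank1 {R P Q S}.

Ltac fs := first [ring | (field; repeat split; try done; try (by rewrite pnatr_eq0))].

Lemma ldl {R : realType} (P Q S : R) : exists n1 n2 g0 g1 h0 h1 : R,
  [/\ g0 * h1 - g1 * h0 != 0, P = n1 * g0 ^+ 2 + n2 * h0 ^+ 2,
      Q = n1 * g0 * g1 + n2 * h0 * h1 & S = n1 * g1 ^+ 2 + n2 * h1 ^+ 2].
Proof.
have [P0|P0] := eqVneq P 0.
  have [S0|S0] := eqVneq S 0.
    exists (Q / 2), (- (Q / 2)), 1, 1, 1, (-1); split.
    + have -> : (1 * -1 - 1 * 1 : R) = -2 by ring.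
      by rewrite oppr_eq0 pnatr_eq0.
    + by rewrite P0; fs.
    + by fs.
    + by rewrite S0; fs.
  exists S, (- (Q ^+ 2 / S)), (Q / S), 1, 1, 0; split.
  + by rewrite mulr0 mul1r sub0r oppr_eq0 oner_neq0.
  + by rewrite P0; fs.
  + by fs.
  + by fs.
exists P, (S - Q ^+ 2 / P), 1, (Q / P), 0, 1; split.
+ by rewrite mul1r mulr0 subr0 oner_neq0.
+ by fs.
+ by fs.
+ by fs.
Qed.



Lemma sqr_pos {R : realType} (x : R) : x != 0 -> 0 < x ^+ 2.
Proof. by move=> h; rewrite exprn_even_gt0 // h orbT. Qed.

Lemma simdiag {R : realType} (p q s x y z : R) : 0 < p -> 0 < p * s - q ^+ 2 ->
 exists m1 m2 c1 c2 a0 a1 b0 b1 : R, [/\ m1 != 0, m2 != 0, a0 * b1 - a1 * b0 != 0,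
   [/\ p = m1 * a0 ^+ 2 + m2 * b0 ^+ 2, q = m1 * a0 * a1 + m2 * b0 * b1
     & s = m1 * a1 ^+ 2 + m2 * b1 ^+ 2] &
   [/\ x = m1 * c1 * a0 ^+ 2 + m2 * c2 * b0 ^+ 2,
       y = m1 * c1 * a0 * a1 + m2 * c2 * b0 * b1
     & z = m1 * c1 * a1 ^+ 2 + m2 * c2 * b1 ^+ 2]].
Proof.
move=> hp hd.
have p0 : p != 0 by rewrite gt_eqF.
have d0 : p * s - q ^+ 2 != 0 by rewrite gt_eqF.
pose D := (x * s + z * p - 2 * y * q) ^+ 2 - 4 * (p * s - q ^+ 2) * (x * z - y ^+ 2).
have hD : 0 <= D.
  have -> : D = (2 * (p * s - q ^+ 2) * (x / p) - (x * s + z * p - 2 * y * q)) ^+ 2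
      + 4 * (p * s - q ^+ 2) * (y - x / p * q) ^+ 2.
    by rewrite /D; field.
  by rewrite addr_ge0 ?sqr_ge0 // mulr_ge0 ?sqr_ge0 // mulr_ge0 // ltW.
pose c1 := ((x * s + z * p - 2 * y * q) + Num.sqrt D) / (2 * (p * s - q ^+ 2)).
have hc1 : (x - c1 * p) * (z - c1 * s) = (y - c1 * q) ^+ 2.
  have h2 : Num.sqrt D ^+ 2 = D by rewrite sqr_sqrtr.
  apply/eqP; rewrite -subr_eq0.
  have -> : (x - c1 * p) * (z - c1 * s) - (y - c1 * q) ^+ 2 =
     (Num.sqrt D ^+ 2 - D) / (4 * (p * s - q ^+ 2)).
    rewrite /c1 /D; field.
    by [].

  by rewrite h2 subrr mul0r.
have [nu [w0 [w1 [hw hP hQ hS]]]] := rank1 hc1.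
pose den := s * w0 ^+ 2 - 2 * q * w0 * w1 + p * w1 ^+ 2.
have hden : 0 < den.
  have e : p * den = (p * w1 - q * w0) ^+ 2 + (p * s - q ^+ 2) * w0 ^+ 2 by rewrite /den; ring.
  have : 0 < p * den.
    rewrite e; have [w00|w00] := eqVneq w0 0.
      rewrite w00 eqxx /= in hw; rewrite w00 expr0n /= !(mulr0, subr0, addr0).
      by apply: sqr_pos; rewrite mulf_neq0.
    by rewrite ltr_wpDl ?sqr_ge0 // mulr_gt0 // sqr_pos.
  by rewrite pmulr_rgt0.
have den0 : den != 0 by rewrite gt_eqF.
pose t := (p * s - q ^+ 2) / den.
have hdet : (p - t * w0 ^+ 2) * (s - t * w1 ^+ 2) = (q - t * w0 * w1) ^+ 2.
  by rewrite /t /den; field; rewrite -/den.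
have [m1 [a0 [a1 [ha hp' hq' hs']]]] := rank1 hdet.
have ep : p = m1 * a0 ^+ 2 + t * w0 ^+ 2 by rewrite -hp'; ring.
have eq : q = m1 * a0 * a1 + t * w0 * w1 by rewrite -hq'; ring.
have es : s = m1 * a1 ^+ 2 + t * w1 ^+ 2 by rewrite -hs'; ring.
have hdd : p * s - q ^+ 2 = m1 * t * (a0 * w1 - a1 * w0) ^+ 2.
  by rewrite [in LHS]ep [in LHS]eq [in LHS]es; ring.
have m10 : m1 != 0 by apply/eqP => m0; move: hd; rewrite hdd m0 !mul0r ltxx.
have t0 : t != 0 by apply/eqP => m0; move: hd; rewrite hdd m0 mulr0 mul0r ltxx.
have dt0 : a0 * w1 - a1 * w0 != 0.
  by apply/eqP => m0; move: hd; rewrite hdd m0 expr0n /= mulr0 ltxx.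
have ex : x = c1 * p + nu * w0 ^+ 2 by rewrite -hP; ring.
have ey : y = c1 * q + nu * w0 * w1 by rewrite -hQ; ring.
have ez : z = c1 * s + nu * w1 ^+ 2 by rewrite -hS; ring.
exists m1, t, c1, (c1 + nu / t), a0, a1, w0, w1; split => //.
rewrite ex ey ez [in c1 * p]ep [in c1 * q]eq [in c1 * s]es; by split; field.
Qed.



Definition o0 : 'I_2 := @Ordinal 2 0 isT.
Definition o1 : 'I_2 := @Ordinal 2 1 isT.
Definition k0 : 'I_4 := @Ordinal 4 0 isT.
Definition k1 : 'I_4 := @Ordinal 4 1 isT.
Definition k2 : 'I_4 := @Ordinal 4 2 isT.
Definition k3 : 'I_4 := @Ordinal 4 3 isT.

Lemma ord2 (i : 'I_2) : i = o0 \/ i = o1.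
Proof. by case: i => [[|[|?]] Hi] //; [left|right]; apply: val_inj. Qed.

Lemma ord4 (i : 'I_4) : [\/ i = k0, i = k1, i = k2 | i = k3].
Proof.
case: i => [[|[|[|[|?]]]] Hi] //;
  [apply: Or41|apply: Or42|apply: Or43|apply: Or44]; exact: val_inj.
Qed.

Lemma sum4 {V : zmodType} (F : 'I_4 -> V) : \sum_(k < 4) F k = F k0 + F k1 + F k2 + F k3.
Proof.
rewrite !big_ord_recl big_ord0 addr0 !addrA.
by congr (F _ + F _ + F _ + F _); apply: val_inj.
Qed.

Lemma sum2 {V : zmodType} (F : 'I_2 -> V) : \sum_(k < 2) F k = F o0 + F o1.
Proof. by rewrite !big_ord_recl big_ord0 addr0; congr (F _ + F _); apply: val_inj. Qed.

Definition vec2 {R : realType} (u v : R) : 'I_2 -> R := fun i => if val i == 0%N then u else v.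

Definition tsym {K : Type} (H : tensor22 K) :=
  (forall i1 i2 j1 j2, H i1 i2 j1 j2 = H j1 i2 i1 j2) /\
  (forall i1 i2 j1 j2, H i1 i2 j1 j2 = H i1 j2 j1 i2).

Lemma tsym_sum {R : realType} r (lam : 'I_r -> R) (u1 u2 : 'I_r -> 'I_2 -> R) :
  tsym (fun i1 i2 j1 j2 => \sum_(k < r) lam k * hsimpleR (u1 k) (u2 k) i1 i2 j1 j2).
Proof.
by split=> *; apply: eq_bigr => k _; rewrite /hsimpleR; ring.
Qed.

Lemma tsym_RD {R : realType} (H : tensor22 R) : in_RD H -> tsym H.
Proof. by case=> r [lam [u1 [u2 ->]]]; apply: tsym_sum. Qed.

Lemma teq {R : realType} (H G : tensor22 R) : tsym H -> tsym G ->
  (forall i1 i2 j1 j2 : 'I_2, (i1 <= j1)%N -> (i2 <= j2)%N -> H i1 i2 j1 j2 = G i1 i2 j1 j2) ->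
  H = G.
Proof.
move=> [h1 h2] [g1 g2] e.
apply: functional_extensionality => i1; apply: functional_extensionality => i2.
apply: functional_extensionality => j1; apply: functional_extensionality => j2.
wlog l1 : i1 j1 / (i1 <= j1)%N.
  move=> W; case: (leqP i1 j1) => l; first exact: W.
  by rewrite h1 [G _ _ _ _]g1 W // ltnW.
wlog l2 : i2 j2 / (i2 <= j2)%N.
  move=> W; case: (leqP i2 j2) => l; first exact: W.
  by rewrite h2 [G _ _ _ _]g2 W // ltnW.
exact: e.
Qed.

Definition indep {R : realType} (a f : 'I_4 -> 'I_2 -> R) :=
  forall v : 'I_4 -> R, (forall i1 i2, \sum_(k < 4) v k * (a k i1 * f k i2) = 0) ->
  forall k, v k = 0.

Definition good {R : realType} (H : tensor22 R) :=
  exists (lam : 'I_4 -> R) (a f : 'I_4 -> 'I_2 -> R),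
    H = (fun i1 i2 j1 j2 => \sum_(k < 4) lam k * hsimpleR (a k) (f k) i1 i2 j1 j2)
    /\ indep a f.

Lemma indep2 {R : realType} (u v a0 a1 b0 b1 : R) : u * a0 + v * b0 = 0 ->
  u * a1 + v * b1 = 0 -> a0 * b1 - a1 * b0 != 0 -> u = 0 /\ v = 0.
Proof.
move=> e1 e2 d.
have hu : u * (a0 * b1 - a1 * b0) = b1 * (u * a0 + v * b0) - b0 * (u * a1 + v * b1) by ring.
have hv : v * (a0 * b1 - a1 * b0) = a0 * (u * a1 + v * b1) - a1 * (u * a0 + v * b0) by ring.
rewrite e1 e2 !mulr0 subrr in hu hv.
by split; apply/eqP; rewrite -(mulIr_eq0 _ (mulIf d)) ?hu ?hv.
Qed.



Lemma core_pd {R : realType} (H : tensor22 R) : tsym H -> 0 < H o0 o0 o0 o0 ->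
  0 < H o0 o0 o0 o0 * H o0 o1 o0 o1 - H o0 o0 o0 o1 ^+ 2 -> good H.
Proof.
move=> hs hp hd.
have [m1 [m2 [c1 [c2 [a0 [a1 [b0 [b1 [m10 m20 dab [Ep Eq Es] [Ex Ey Ez]]]]]]]]]] :=
  @simdiag _ (H o0 o0 o0 o0) (H o0 o0 o0 o1) (H o0 o1 o0 o1) (H o0 o0 o1 o0) (H o0 o0 o1 o1) (H o0 o1 o1 o1) hp hd.
have [n1 [n2 [g0 [g1 [h0 [h1 [dgh Sp Sq Ss]]]]]]] := ldl
  (H o1 o0 o1 o0 - m1 * c1 ^+ 2 * a0 ^+ 2 - m2 * c2 ^+ 2 * b0 ^+ 2)
  (H o1 o0 o1 o1 - m1 * c1 ^+ 2 * a0 * a1 - m2 * c2 ^+ 2 * b0 * b1)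
  (H o1 o1 o1 o1 - m1 * c1 ^+ 2 * a1 ^+ 2 - m2 * c2 ^+ 2 * b1 ^+ 2).
have Bp : H o1 o0 o1 o0 = m1 * c1 ^+ 2 * a0 ^+ 2 + m2 * c2 ^+ 2 * b0 ^+ 2
   + (n1 * g0 ^+ 2 + n2 * h0 ^+ 2) by rewrite -Sp; ring.
have Bq : H o1 o0 o1 o1 = m1 * c1 ^+ 2 * a0 * a1 + m2 * c2 ^+ 2 * b0 * b1
   + (n1 * g0 * g1 + n2 * h0 * h1) by rewrite -Sq; ring.
have Bs : H o1 o1 o1 o1 = m1 * c1 ^+ 2 * a1 ^+ 2 + m2 * c2 ^+ 2 * b1 ^+ 2
   + (n1 * g1 ^+ 2 + n2 * h1 ^+ 2) by rewrite -Ss; ring.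
exists (fun k : 'I_4 => nth 0 [:: m1; m2; n1; n2] k).
exists (fun k : 'I_4 => nth (vec2 0 0) [:: vec2 1 c1; vec2 1 c2; vec2 0 1; vec2 0 1] k).
exists (fun k : 'I_4 => nth (vec2 0 0) [:: vec2 a0 a1; vec2 b0 b1; vec2 g0 g1; vec2 h0 h1] k).
split.
  apply: teq => //; first exact: tsym_sum.
  move=> i1 i2 j1 j2; case: (ord2 i1) => ->; case: (ord2 i2) => ->;
    case: (ord2 j1) => ->; case: (ord2 j2) => -> //= _ _;
    rewrite sum4 /= /hsimpleR /vec2 /= ?Ep ?Eq ?Es ?Ex ?Ey ?Ez ?Bp ?Bq ?Bs; ring.
move=> v hv.
have e00 := hv o0 o0; have e01 := hv o0 o1; have e10 := hv o1 o0; have e11 := hv o1 o1.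
move: e00 e01 e10 e11; rewrite !sum4 /= /vec2 /= => e00 e01 e10 e11.
have [v0 v1] : v k0 = 0 /\ v k1 = 0.
  by apply: (@indep2 _ _ _ a0 a1 b0 b1 _ _ dab); [rewrite -e00 | rewrite -e01]; ring.
rewrite v0 v1 in e10 e11.
have [v2 v3] : v k2 = 0 /\ v k3 = 0.
  by apply: (@indep2 _ _ _ g0 g1 h0 h1 _ _ dgh); [rewrite -e10 | rewrite -e11]; ring.
by move=> k; case: (ord4 k) => ->.
Qed.

Lemma core_zero {R : realType} (H : tensor22 R) : tsym H ->
  H o0 o0 o0 o0 = 0 -> H o0 o0 o0 o1 = 0 -> H o0 o1 o0 o1 = 0 ->
  H o1 o0 o1 o0 = 0 -> H o1 o0 o1 o1 = 0 -> H o1 o1 o1 o1 = 0 -> good H.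
Proof.
move=> hs Ep Eq Es Bp Bq Bs.
have [n1 [n2 [g0 [g1 [h0 [h1 [dgh Ex Ey Ez]]]]]]] :=
  ldl (H o0 o0 o1 o0) (H o0 o0 o1 o1) (H o0 o1 o1 o1).
exists (fun k : 'I_4 => nth 0 [:: n1 / 2; n2 / 2; - (n1 / 2); - (n2 / 2)] k).
exists (fun k : 'I_4 => nth (vec2 0 0) [:: vec2 1 1; vec2 1 1; vec2 1 (-1); vec2 1 (-1)] k).
exists (fun k : 'I_4 => nth (vec2 0 0) [:: vec2 g0 g1; vec2 h0 h1; vec2 g0 g1; vec2 h0 h1] k).
split.
  apply: teq => //; first exact: tsym_sum.
  move=> i1 i2 j1 j2; case: (ord2 i1) => ->; case: (ord2 i2) => ->;
    case: (ord2 j1) => ->; case: (ord2 j2) => -> //= _ _;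
    rewrite sum4 /= /hsimpleR /vec2 /= ?Ep ?Eq ?Es ?Ex ?Ey ?Ez ?Bp ?Bq ?Bs; field; try by rewrite ?pnatr_eq0.
move=> v hv.
have e00 := hv o0 o0; have e01 := hv o0 o1; have e10 := hv o1 o0; have e11 := hv o1 o1.
move: e00 e01 e10 e11; rewrite !sum4 /= /vec2 /= => e00 e01 e10 e11.
have [u0 u1] : v k0 + v k2 = 0 /\ v k1 + v k3 = 0.
  by apply: (@indep2 _ _ _ g0 g1 h0 h1 _ _ dgh); [rewrite -e00 | rewrite -e01]; ring.
have [w0 w1] : v k0 - v k2 = 0 /\ v k1 - v k3 = 0.
  by apply: (@indep2 _ _ _ g0 g1 h0 h1 _ _ dgh); [rewrite -e10 | rewrite -e11]; ring.
have h2 : (2 : R) != 0 by rewrite pnatr_eq0.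
have v0 : v k0 = ((v k0 + v k2) + (v k0 - v k2)) / 2 by field.
have v2 : v k2 = ((v k0 + v k2) - (v k0 - v k2)) / 2 by field.
have v1 : v k1 = ((v k1 + v k3) + (v k1 - v k3)) / 2 by field.
have v3 : v k3 = ((v k1 + v k3) - (v k1 - v k3)) / 2 by field.
rewrite u0 w0 subr0 addr0 mul0r in v0 v2.
rewrite u1 w1 subr0 addr0 mul0r in v1 v3.
by move=> k; case: (ord4 k) => ->.
Qed.



Lemma rank_diag {F : fieldType} n (d : 'rV[F]_n) :
  \rank (diag_mx d) = (\sum_(k < n) nat_of_bool (d ord0 k != 0%R))%N.
Proof.
elim: n d => [|n IH] d.
  by rewrite big_ord0; apply/eqP; rewrite -leqn0 rank_leq_row.
rewrite big_ord_recl.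
pose l := lsubmx (d : 'rV_(1 + n)); pose r := rsubmx (d : 'rV_(1 + n)).
have E : diag_mx d = block_mx (diag_mx l) 0 0 (diag_mx r) :> 'M_(1 + n).
  by rewrite -diag_mx_row hsubmxK.
have := rank_diag_block_mx (diag_mx l) (diag_mx r).
rewrite -E => ->; rewrite IH rank_rV.
congr (_ + _)%N.
  congr (nat_of_bool (~~ _)); apply/eqP/eqP => [/matrixP/(_ 0 0)|h].
    rewrite /l !mxE eqxx mulr1n => <-; congr (d _ _); exact: val_inj.
  apply/matrixP => i j; rewrite /l !mxE (ord1 i) (ord1 j) eqxx mulr1n -h.
  by congr (d _ _); apply: val_inj.
apply: eq_bigr => k _; rewrite /r mxE; congr (nat_of_bool (d _ _ != 0)); exact: val_inj.
Qed.

Definition idx (i1 i2 : 'I_2) : 'I_(2 + 2).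
Proof. apply: (@Ordinal _ (2 * i1 + i2)); case: (ord2 i1) => ->; case: (ord2 i2) => ->; done. Defined.

Lemma fst_idxE i1 i2 : fst_idx (idx i1 i2) = i1.
Proof.
apply: val_inj; case: (ord2 i1) => ->; case: (ord2 i2) => ->;
  by rewrite /fst_idx /= inordK.
Qed.

Lemma snd_idxE i1 i2 : snd_idx (idx i1 i2) = i2.
Proof.
apply: val_inj; case: (ord2 i1) => ->; case: (ord2 i2) => ->;
  by rewrite /snd_idx /= inordK.
Qed.

Lemma idx_l (i : 'I_2) : fst_idx (lshift 2 i) = o0 /\ snd_idx (lshift 2 i) = i.
Proof.
by case: (ord2 i) => ->; split; apply: val_inj; rewrite /fst_idx /snd_idx /= inordK.
Qed.

Lemma idx_r (i : 'I_2) : fst_idx (rshift 2 i) = o1 /\ snd_idx (rshift 2 i) = i.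
Proof.
by case: (ord2 i) => ->; split; apply: val_inj; rewrite /fst_idx /snd_idx /= inordK.
Qed.

Lemma ulE {R : realType} (H : tensor22 R) i j : ulsubmx (hflat H) i j = H o0 i o0 j.
Proof. by rewrite !mxE; case: (idx_l i) => -> ->; case: (idx_l j) => -> ->. Qed.

Lemma drE {R : realType} (H : tensor22 R) i j : drsubmx (hflat H) i j = H o1 i o1 j.
Proof. by rewrite !mxE; case: (idx_r i) => -> ->; case: (idx_r j) => -> ->. Qed.

Definition Xm {R : realType} (a f : 'I_4 -> 'I_2 -> R) : 'M[R]_(2 + 2, 4) :=
  \matrix_(i, k) (a k (fst_idx i) * f k (snd_idx i)).

Lemma flatX {R : realType} (lam : 'I_4 -> R) (a f : 'I_4 -> 'I_2 -> R) :
  hflat (fun i1 i2 j1 j2 => \sum_(k < 4) lam k * hsimpleR (a k) (f k) i1 i2 j1 j2) =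
  Xm a f *m diag_mx (\row_k lam k) *m (Xm a f)^T.
Proof.
apply/matrixP => i j; rewrite mul_mx_diag !mxE; apply: eq_bigr => k _.
by rewrite !mxE /hsimpleR; ring.
Qed.

Lemma Xfree {R : realType} (a f : 'I_4 -> 'I_2 -> R) : indep a f -> row_free (Xm a f)^T.
Proof.
move=> hi; apply: inj_row_free => v hv.
have h := hi (fun k => v 0 k).
apply/matrixP => i k; rewrite (ord1 i) mxE h // => i1 i2.
transitivity ((v *m (Xm a f)^T) 0 (idx i1 i2)); last by rewrite hv mxE.
rewrite mxE; apply: eq_bigr => l _; by rewrite !mxE fst_idxE snd_idxE.
Qed.

Lemma rank_good {R : realType} (lam : 'I_4 -> R) (a f : 'I_4 -> 'I_2 -> R) :
  indep a f ->
  \rank (hflat (fun i1 i2 j1 j2 => \sum_(k < 4) lam k * hsimpleR (a k) (f k) i1 i2 j1 j2))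
  = (\sum_(k < 4) nat_of_bool (lam k != 0%R))%N.
Proof.
move=> hi; rewrite flatX mxrankMfree ?Xfree // -mxrank_tr trmx_mul mxrankMfree ?Xfree //.
rewrite mxrank_tr rank_diag; apply: eq_bigr => k _; by rewrite mxE.
Qed.



Lemma decomp_filter {R : realType} (lam : 'I_4 -> R) (a f : 'I_4 -> 'I_2 -> R) :
  hdecompR_le (fun i1 i2 j1 j2 => \sum_(k < 4) lam k * hsimpleR (a k) (f k) i1 i2 j1 j2)
    (\sum_(k < 4) nat_of_bool (lam k != 0%R))%N.
Proof.
set P := [pred k : 'I_4 | lam k != 0].
have -> : (\sum_(k < 4) nat_of_bool (lam k != 0%R))%N = #|P|.
  by rewrite -sum1_card [RHS]big_mkcond /=; apply: eq_bigr => k _; rewrite inE; case: (lam k != 0).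
exists (fun j => lam (enum_val j)), (fun j => a (enum_val j)), (fun j => f (enum_val j)).
apply: functional_extensionality => i1; apply: functional_extensionality => i2.
apply: functional_extensionality => j1; apply: functional_extensionality => j2.
rewrite -(big_enum_val (A := P) (fun k => lam k * hsimpleR (a k) (f k) i1 i2 j1 j2)).
rewrite [RHS]big_mkcond /=; apply: eq_bigr => k _; rewrite inE.
by case: ifP => // /negbFE/eqP ->; rewrite mul0r.
Qed.

Lemma rank_sum_le {F : fieldType} m p n (M : 'I_n -> 'M[F]_(m, p)) :
  (forall k, (mxrank (M k) <= 1)%N) -> (mxrank (\sum_(k < n) M k)%R <= n)%N.
Proof.
elim: n M => [|n IH] M hM; first by rewrite big_ord0 mxrank0.
rewrite big_ord_recr /=; apply: leq_trans (mxrank_add _ _) _.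
have := leq_add (IH (fun i => M (widen_ord (leqnSn n) i)) (fun k => hM _)) (hM ord_max).
by rewrite addn1.
Qed.

Lemma lower_bound {R : realType} (H : tensor22 R) s :
  hdecomp_le (tensorC H) s -> (\rank (hflat H) <= s)%N.
Proof.
case=> lam [u1 [u2 e]].
rewrite -(mxrank_map (real_complex R)).
have -> : map_mx (real_complex R) (hflat H) = \sum_(k < s)
   ((real_complex R (lam k)) *: ((\col_i (u1 k (fst_idx i) * u2 k (snd_idx i))) *m
     (\row_j (conjc (u1 k (fst_idx j)) * conjc (u2 k (snd_idx j)))))).
  apply/matrixP => i j; rewrite summxE !mxE.
  have := congr1 (fun T : tensor22 R[i] => T (fst_idx i) (snd_idx i) (fst_idx j) (snd_idx j)) e.
  rewrite /tensorC => ->; apply: eq_bigr => k _; rewrite !mxE big_ord1 !mxE /hsimple.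
  by rewrite !mulrA.
apply: rank_sum_le => k; apply: leq_trans (mxrank_scale _ _) _.
by apply: leq_trans (mxrankM_maxl _ _) _; apply: rank_leq_col.
Qed.

Lemma real_to_complex {R : realType} (H : tensor22 R) r :
  hdecompR_le H r -> hdecomp_le (tensorC H) r.
Proof.
case=> lam [u1 [u2 e]].
exists lam, (fun k i => real_complex R (u1 k i)), (fun k i => real_complex R (u2 k i)).
apply: functional_extensionality => i1; apply: functional_extensionality => i2.
apply: functional_extensionality => j1; apply: functional_extensionality => j2.
rewrite /tensorC e rmorph_sum; apply: eq_bigr => k _.
by rewrite /hsimple /hsimpleR !conjc_real !rmorphM.
Qed.

Lemma ex_min (P : nat -> Prop) n : P n -> exists r, P r /\ forall s, P s -> (r <= s)%N.
Proof.
elim: n {-2}n (leqnn n) => [|N IH] n hn hP.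
  by exists n => //; split=> // s _; move: hn; rewrite leqn0 => /eqP ->.
case: (classic (exists s, (s < n)%N /\ P s)) => [[s [hs Ps]]|no].
  by apply: (IH s) => //; rewrite -ltnS; apply: leq_trans hs hn.
exists n; split=> // s Ps; rewrite leqNgt; apply/negP => hs; apply: no; by exists s.
Qed.



Definition negT {R : realType} (H : tensor22 R) : tensor22 R :=
  fun i1 i2 j1 j2 => - H i1 i2 j1 j2.
Definition swapT {R : realType} (H : tensor22 R) : tensor22 R :=
  fun i1 i2 j1 j2 => H (rev_ord i1) i2 (rev_ord j1) j2.

Lemma tsym_neg {R : realType} (H : tensor22 R) : tsym H -> tsym (negT H).
Proof. by case=> h1 h2; split=> *; [rewrite /negT h1 | rewrite /negT h2]. Qed.

Lemma tsym_swap {R : realType} (H : tensor22 R) : tsym H -> tsym (swapT H).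
Proof. by case=> h1 h2; split=> *; [rewrite /swapT h1 | rewrite /swapT h2]. Qed.

Ltac fext := apply: functional_extensionality => ?; apply: functional_extensionality => ?;
  apply: functional_extensionality => ?; apply: functional_extensionality => ?.

Lemma dec_neg {R : realType} (H : tensor22 R) n : hdecompR_le (negT H) n -> hdecompR_le H n.
Proof.
case=> lam [a [f e]]; exists (fun k => - lam k), a, f; fext.
match goal with |- H ?i1 ?i2 ?j1 ?j2 = _ =>
  have := congr1 (fun T : tensor22 R => T i1 i2 j1 j2) e end.
rewrite /negT => e'; rewrite -[H _ _ _ _]opprK e' -sumrN.
by apply: eq_bigr => k _; rewrite mulNr.
Qed.

Lemma good_neg {R : realType} (H : tensor22 R) : good (negT H) -> good H.
Proof.
case=> lam [a [f [e hi]]]; exists (fun k => - lam k), a, f; split => //; fext.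
match goal with |- H ?i1 ?i2 ?j1 ?j2 = _ =>
  have := congr1 (fun T : tensor22 R => T i1 i2 j1 j2) e end.
rewrite /negT => e'; rewrite -[H _ _ _ _]opprK e' -sumrN.
by apply: eq_bigr => k _; rewrite mulNr.
Qed.

Lemma dec_swap {R : realType} (H : tensor22 R) n : hdecompR_le (swapT H) n -> hdecompR_le H n.
Proof.
case=> lam [a [f e]]; exists lam, (fun k i => a k (rev_ord i)), f; fext.
match goal with |- H ?i1 ?i2 ?j1 ?j2 = _ =>
  have := congr1 (fun T : tensor22 R => T (rev_ord i1) i2 (rev_ord j1) j2) e end.
by rewrite /swapT !rev_ordK.
Qed.

Lemma good_swap {R : realType} (H : tensor22 R) : good (swapT H) -> good H.
Proof.
case=> lam [a [f [e hi]]]; exists lam, (fun k i => a k (rev_ord i)), f; split.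
  fext; match goal with |- H ?i1 ?i2 ?j1 ?j2 = _ =>
    have := congr1 (fun T : tensor22 R => T (rev_ord i1) i2 (rev_ord j1) j2) e end.
  by rewrite /swapT !rev_ordK.
move=> v hv; apply: hi => i1 i2; have := hv (rev_ord i1) i2; by rewrite rev_ordK.
Qed.

Lemma good4 {R : realType} (H : tensor22 R) : good H -> hdecompR_le H 4.
Proof. by case=> lam [a [f [e _]]]; exists lam, a, f. Qed.

Lemma rev_o0 : rev_ord o0 = o1. Proof. exact: val_inj. Qed.
Lemma rev_o1 : rev_ord o1 = o0. Proof. exact: val_inj. Qed.

Lemma qf2 {R : realType} (M : 'M[R]_2) (u v : R) :
  ((\col_i vec2 u v i)^T *m M *m (\col_i vec2 u v i)) 0 0 =
  u * (u * M o0 o0 + v * M o1 o0) + v * (u * M o0 o1 + v * M o1 o1).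
Proof.
rewrite !mxE !sum2 !mxE !sum2 !mxE /vec2 /=; ring.
Qed.

Lemma pd2 {R : realType} (M : 'M[R]_2) : posdef M -> M o0 o1 = M o1 o0 ->
  0 < M o0 o0 /\ 0 < M o0 o0 * M o1 o1 - M o0 o1 ^+ 2.
Proof.
move=> hM hs.
have nz (u v : R) : u != 0 -> (\col_i vec2 u v i) != 0.
  move=> hu; apply/eqP => /matrixP/(_ o0 0); rewrite !mxE /vec2 /= => h.
  by move: hu; rewrite h eqxx.
have h1 := hM _ (nz 1 0 (oner_neq0 _)); rewrite qf2 in h1.
have p0 : 0 < M o0 o0 by move: h1; congr (_ < _); ring.
split => //.
have nz2 : (\col_i vec2 (- M o0 o1) (M o0 o0) i) != 0.
  apply/eqP => /matrixP/(_ o1 0); rewrite !mxE /vec2 /= => h.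
  by move: p0; rewrite h ltxx.
have := hM _ nz2; rewrite qf2 -hs.
have -> : - M o0 o1 * (- M o0 o1 * M o0 o0 + M o0 o0 * M o0 o1) +
   M o0 o0 * (- M o0 o1 * M o0 o1 + M o0 o0 * M o1 o1) =
   M o0 o0 * (M o0 o0 * M o1 o1 - M o0 o1 ^+ 2) by ring.
by rewrite pmulr_rgt0.
Qed.



Lemma sq1_gt0 {R : realType} (q : R) : 0 < q ^+ 2 + 1.
Proof. exact: ltr_wpDl (sqr_ge0 q) ltr01. Qed.

Lemma shift {R : realType} (p q s : R) : ~ (p = 0 /\ q = 0 /\ s = 0) -> exists t w0 w1 : R,
  (0 < p - t * w0 ^+ 2 /\
   0 < (p - t * w0 ^+ 2) * (s - t * w1 ^+ 2) - (q - t * w0 * w1) ^+ 2) \/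
  (0 < - (p - t * w0 ^+ 2) /\
   0 < (- (p - t * w0 ^+ 2)) * (- (s - t * w1 ^+ 2)) - (- (q - t * w0 * w1)) ^+ 2).
Proof.
move=> nz.
case: (ltrgtP s 0) => hs.
- have s0 : s != 0 by rewrite lt_eqF.
  exists (p + (q ^+ 2 + 1) / (- s)), 1, 0; right.
  have -> : - (p - (p + (q ^+ 2 + 1) / - s) * 1 ^+ 2) = (q ^+ 2 + 1) / (- s) by field.
  split; first by rewrite divr_gt0 ?sq1_gt0 // oppr_gt0.
  have -> : (q ^+ 2 + 1) / - s * - (s - (p + (q ^+ 2 + 1) / - s) * 0 ^+ 2) -
    (- (q - (p + (q ^+ 2 + 1) / - s) * 1 * 0)) ^+ 2 = 1 by field.
  exact: ltr01.
- have s0 : s != 0 by rewrite gt_eqF.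
  exists (p - (q ^+ 2 + 1) / s), 1, 0; left.
  have -> : p - (p - (q ^+ 2 + 1) / s) * 1 ^+ 2 = (q ^+ 2 + 1) / s by field.
  split; first by rewrite divr_gt0 ?sq1_gt0.
  have -> : (q ^+ 2 + 1) / s * (s - (p - (q ^+ 2 + 1) / s) * 0 ^+ 2) -
    (q - (p - (q ^+ 2 + 1) / s) * 1 * 0) ^+ 2 = 1 by field.
  exact: ltr01.
case: (ltrgtP p 0) => hp.
- have p0 : p != 0 by rewrite lt_eqF.
  exists ((q ^+ 2 + 1) / (- p)), 0, 1; right.
  have -> : - (p - (q ^+ 2 + 1) / - p * 0 ^+ 2) = - p by ring.
  split; first by rewrite oppr_gt0.
  have -> : - p * - (s - (q ^+ 2 + 1) / - p * 1 ^+ 2) -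
    (- (q - (q ^+ 2 + 1) / - p * 0 * 1)) ^+ 2 = 1 by rewrite hs; field.
  exact: ltr01.
- have p0 : p != 0 by rewrite gt_eqF.
  exists (- ((q ^+ 2 + 1) / p)), 0, 1; left.
  have -> : p - - ((q ^+ 2 + 1) / p) * 0 ^+ 2 = p by ring.
  split => //.
  have -> : p * (s - - ((q ^+ 2 + 1) / p) * 1 ^+ 2) -
    (q - - ((q ^+ 2 + 1) / p) * 0 * 1) ^+ 2 = 1 by rewrite hs; field.
  exact: ltr01.
have q0 : q != 0 by apply/eqP => q0; apply: nz.
exists q, 1, 1.
have e1 : p - q * 1 ^+ 2 = - q by rewrite hp; ring.
have e2 : s - q * 1 ^+ 2 = - q by rewrite hs; ring.
have e3 : q - q * 1 * 1 = 0 by ring.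
rewrite e1 e2 e3 oppr0 expr0n /= subr0 mulNr mulrN opprK.
case: (ltrgtP q 0) => hq.
- by left; split; [rewrite oppr_gt0 | rewrite -expr2 sqr_pos].
- right; split; first by rewrite opprK.
  by rewrite !opprK subr0 -expr2; apply: sqr_pos.
- by move: q0; rewrite hq eqxx.
Qed.

Lemma dec_add1 {R : realType} (H : tensor22 R) n (t : R) (u v : 'I_2 -> R) :
  hdecompR_le (fun i1 i2 j1 j2 => H i1 i2 j1 j2 - t * hsimpleR u v i1 i2 j1 j2) n ->
  hdecompR_le H n.+1.
Proof.
case=> lam [a [f e]].
exists (fun k => oapp lam t (unlift ord_max k)).
exists (fun k => oapp a u (unlift ord_max k)).
exists (fun k => oapp f v (unlift ord_max k)).
fext; rewrite big_ord_recr /= unlift_none /=.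
match goal with |- H ?i1 ?i2 ?j1 ?j2 = _ =>
  have := congr1 (fun T : tensor22 R => T i1 i2 j1 j2) e end.
move=> /= e'.
have wl : forall i : 'I_n, widen_ord (leqnSn n) i = lift ord_max i.
  by move=> i; apply: val_inj; rewrite /= /bump leqNgt ltn_ord.
under eq_bigr do rewrite wl liftK /=.
by rewrite -e'; ring.
Qed.

Lemma dec_pad {R : realType} (H : tensor22 R) n : hdecompR_le H n -> hdecompR_le H n.+1.
Proof.
move=> h; apply: (@dec_add1 _ _ _ 0 (vec2 0 0) (vec2 0 0)).
have -> : (fun i1 i2 j1 j2 => H i1 i2 j1 j2 - 0 * hsimpleR (vec2 0 0) (vec2 0 0) i1 i2 j1 j2) = H.
  by fext; rewrite mul0r subr0.
exact: h.
Qed.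

Lemma five_A {R : realType} (H : tensor22 R) : tsym H ->
  ~ (H o0 o0 o0 o0 = 0 /\ H o0 o0 o0 o1 = 0 /\ H o0 o1 o0 o1 = 0) -> hdecompR_le H 5.
Proof.
move=> [h1 h2] nz.
have [t [w0 [w1 ht]]] := shift _ _ _ nz.
apply: (@dec_add1 _ _ _ t (vec2 1 0) (vec2 w0 w1)).
set H' := fun i1 i2 j1 j2 => _.
have hs' : tsym H'.
  by split=> i1 i2 j1 j2; rewrite /H' /hsimpleR; [rewrite [H i1 _ _ _]h1 | rewrite [H i1 _ _ _]h2]; ring.
have E1 : H' o0 o0 o0 o0 = H o0 o0 o0 o0 - t * w0 ^+ 2 by rewrite /H' /hsimpleR /vec2 /=; ring.
have E2 : H' o0 o0 o0 o1 = H o0 o0 o0 o1 - t * w0 * w1 by rewrite /H' /hsimpleR /vec2 /=; ring.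
have E3 : H' o0 o1 o0 o1 = H o0 o1 o0 o1 - t * w1 ^+ 2 by rewrite /H' /hsimpleR /vec2 /=; ring.
apply: good4; case: ht => [[ha hb]|[ha hb]].
  by apply: core_pd => //; rewrite E1 ?E2 ?E3.
apply: good_neg; apply: core_pd; first exact: tsym_neg.
  by rewrite /negT E1.
by rewrite /negT E1 E2 E3.
Qed.



Lemma ulNE {R : realType} (H : tensor22 R) i j : (- ulsubmx (hflat H)) i j = - H o0 i o0 j.
Proof. by rewrite mxE ulE. Qed.
Lemma drNE {R : realType} (H : tensor22 R) i j : (- drsubmx (hflat H)) i j = - H o1 i o1 j.
Proof. by rewrite mxE drE. Qed.

Theorem theorem4p3 (R : realType) (H : tensor22 R) :
  in_RD H ->
  let A := ulsubmx (hflat H) in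
  let B := drsubmx (hflat H) in
  (exists r, is_hrankR H r /\ (r <= 5)%N) /\
  ((posdef A \/ negdef A \/ posdef B \/ negdef B \/ (A = 0 /\ B = 0)) ->
   exists r, is_hrank (tensorC H) r /\ is_hrankR H r /\ (r <= 4)%N).
Proof.
move=> hRD A B.
have hs := tsym_RD _ hRD.
have [h1 h2] := hs.
split.
  have d5 : hdecompR_le H 5.
    case: (classic (H o0 o0 o0 o0 = 0 /\ H o0 o0 o0 o1 = 0 /\ H o0 o1 o0 o1 = 0))
      => [[a1 [a2 a3]]|nA]; last exact: five_A.
    case: (classic (H o1 o0 o1 o0 = 0 /\ H o1 o0 o1 o1 = 0 /\ H o1 o1 o1 o1 = 0))
      => [[b1 [b2 b3]]|nB].
      by apply: dec_pad; apply: good4; apply: core_zero.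
    apply: dec_swap; apply: five_A; first exact: tsym_swap.
    by rewrite /swapT !rev_o0.
  have [r [hr hmin]] := ex_min _ _ d5.
  by exists r; split; [split | apply: hmin].
move=> hc.
have g : good H.
  case: hc => [hA|[hA|[hB|[hB|[hA hB]]]]].
  - have sA : A o0 o1 = A o1 o0 by rewrite /A !ulE h2.
    have [] := pd2 _ hA sA; rewrite /A !ulE => p0 d0.
    by apply: core_pd.
  - have sA : (- A) o0 o1 = (- A) o1 o0 by rewrite /A !ulNE h2.
    have [] := pd2 _ hA sA; rewrite /A !ulNE => p0 d0.
    by apply: good_neg; apply: core_pd => //; exact: tsym_neg.
  - have sB : B o0 o1 = B o1 o0 by rewrite /B !drE h2.
    have [] := pd2 _ hB sB; rewrite /B !drE => p0 d0.
    apply: good_swap; apply: core_pd; first exact: tsym_swap.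
      by rewrite /swapT !rev_o0.
    by rewrite /swapT !rev_o0.
  - have sB : (- B) o0 o1 = (- B) o1 o0 by rewrite /B !drNE h2.
    have [] := pd2 _ hB sB; rewrite /B !drNE => p0 d0.
    apply: good_swap; apply: good_neg; apply: core_pd.
    + exact: tsym_neg _ (tsym_swap _ hs).
    + by rewrite /negT /swapT !rev_o0.
    + by rewrite /negT /swapT !rev_o0.
  - have a0 i j : H o0 i o0 j = 0 by rewrite -ulE -/A hA mxE.
    have b0 i j : H o1 i o1 j = 0 by rewrite -drE -/B hB mxE.
    by apply: core_zero; rewrite ?a0 ?b0.
have dR : hdecompR_le H (\rank (hflat H)).
  case: g => lam [a [f [e hi]]].
  by rewrite e rank_good //; apply: decomp_filter.
exists (\rank (hflat H)); split; last split.
- split; first exact: real_to_complex.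
  by move=> s; apply: lower_bound.
- split=> // s hs'; apply: lower_bound; exact: real_to_complex.
- exact: rank_leq_row.
Qed.
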